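(* Let $\hat\tau^{\mathrm{ols}}$ be the ordinary least squares coefficient of $Z_{ij}$ obtained by fitting the one-stage meta-analysis model $Y_{ij}=\phi+\tau Z_{ij}+\sum_{l\in F}\{\beta_{i,l}X_{ij,l}+\gamma_{i,l}X_{ij,l}Z_{ij}\}+\sum_{l\in C}\{\beta_l X_{ij,l}+\gamma_l X_{ij,l}Z_{ij}\}+\epsilon_{ij}$, i.e. the OLS regression of $Y_{ij}$ on an intercept, $Z_{ij}$, the regressors $1\{i=i'\}X_{ij,l}$ ($l\in F$, $i'=1,\dots,m$), the regressors $X_{ij,l}$ ($l\in C$), and all of these regressors multiplied by $Z_{ij}$. For $z\in\{0,1\}$ let $(\hat w^{\mathrm{ols}}_{z,ij})_{ij:Z_{ij}=z}$ be the solution of minimize $\sum_{i=1}^m\sum_{j:Z_{ij}=z}w_{ij}^2$ subject to $\sum_{i=1}^m\sum_{j:Z_{ij}=z}w_{ij}X_{ij,l}=0$ for all $l\in C$; $\sum_{j:Z_{ij}=z}w_{ij}X_{ij,l}=0$ for all $l\in F$ and all $i=1,\dots,m$; and $\sum_{i=1}^m\sum_{j:Z_{ij}=z}w_{ij}=1$. Then $\hat\tau^{\mathrm{ols}}=\sum_{i=1}^m\sum_{j:Z_{ij}=1}\hat w^{\mathrm{ols}}_{1,ij}Y_{ij}-\sum_{i=1}^m\sum_{j:Z_{ij}=0}\hat w^{\mathrm{ols}}_{0,ij}Y_{ij}$.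
   Context: Individual-level data from $m$ studies: study $i$ has $n_i$ individuals; individual $ij$ has binary treatment $Z_{ij}$, covariate vector $X_{ij}=(X_{ij,1},\dots,X_{ij,p})^\top\in\mathbb{R}^p$ and outcome $Y_{ij}$. The covariate indices are split into a set $F$ (covariates with study-specific, ''fixed'', coefficients) and a set $C$ (covariates with coefficients common to all studies), with $F\cup C=\{1,\dots,p\}$. The intercept $\phi$ and treatment effect $\tau$ are common to all studies. The OLS fit is assumed to be well defined (design matrix of full column rank). *)

(* Defs.v *)
From mathcomp Require Import all_boot all_order all_algebra.
Set Implicit Arguments. Unset Strict Implicit. Unset Printing Implicit Defensive.
Import Order.TTheory GRing.Theory Num.Theory.
Local Open Scope ring_scope.

(* Data layout: m studies; study i has n i individuals indexed by 'I_(n i);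
   Z i j : bool (treatment), X i j : 'I_p -> R (covariates), Y i j : R. *)

(* Regressor (column) indices of the one-stage model:
   (b, base) where b = true means "multiplied by Z_ij", and
   base = None                : the constant 1 (so (false,None) = intercept,
                                (true,None) = Z_ij, the column of tau);
   base = Some (Some i', l)   : 1{i = i'} X_ij,l   (meant for l in F);
   base = Some (None, l)      : X_ij,l             (meant for l in C). *)
Definition col_idx (m p : nat) : finType :=
  (bool * option (option 'I_m * 'I_p))%type.

Definition valid_col (m p : nat) (F C : {set 'I_p}) (c : col_idx m p) : bool :=
  match c.2 with
  | None => true
  | Some (Some _, l) => l \in F
  | Some (None, l) => l \in C
  end.

Definition regressor (R : realDomainType) (m p : nat) (n : 'I_m -> nat)
  (Z : forall i : 'I_m, 'I_(n i) -> bool)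
  (X : forall i : 'I_m, 'I_(n i) -> 'I_p -> R)
  (c : col_idx m p) (i : 'I_m) (j : 'I_(n i)) : R :=
  (match c.2 with
   | None => 1
   | Some (Some i', l) => (i == i')%:R * X i j l
   | Some (None, l) => X i j l
   end) * (if c.1 then (Z i j)%:R else 1).

Arguments regressor {R m p n} Z X c i j.

Definition fitted (R : realDomainType) (m p : nat) (n : 'I_m -> nat)
  (F C : {set 'I_p}) (Z : forall i : 'I_m, 'I_(n i) -> bool)
  (X : forall i : 'I_m, 'I_(n i) -> 'I_p -> R)
  (beta : col_idx m p -> R) (i : 'I_m) (j : 'I_(n i)) : R :=
  \sum_(c | valid_col F C c) beta c * regressor Z X c i j.

Arguments fitted {R m p n} F C Z X beta i j.

Definition rss (R : realDomainType) (m p : nat) (n : 'I_m -> nat)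
  (F C : {set 'I_p}) (Z : forall i : 'I_m, 'I_(n i) -> bool)
  (X : forall i : 'I_m, 'I_(n i) -> 'I_p -> R)
  (Y : forall i : 'I_m, 'I_(n i) -> R) (beta : col_idx m p -> R) : R :=
  \sum_(i < m) \sum_(j < n i) (Y i j - fitted F C Z X beta i j) ^+ 2.

Definition design_full_rank (R : realDomainType) (m p : nat) (n : 'I_m -> nat)
  (F C : {set 'I_p}) (Z : forall i : 'I_m, 'I_(n i) -> bool)
  (X : forall i : 'I_m, 'I_(n i) -> 'I_p -> R) : Prop :=
  forall beta : col_idx m p -> R,
    (forall (i : 'I_m) (j : 'I_(n i)), fitted F C Z X beta i j = 0) ->
    forall c, valid_col F C c -> beta c = 0.

Definition is_ols (R : realDomainType) (m p : nat) (n : 'I_m -> nat)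
  (F C : {set 'I_p}) (Z : forall i : 'I_m, 'I_(n i) -> bool)
  (X : forall i : 'I_m, 'I_(n i) -> 'I_p -> R)
  (Y : forall i : 'I_m, 'I_(n i) -> R) (beta : col_idx m p -> R) : Prop :=
  forall beta' : col_idx m p -> R, rss F C Z X Y beta <= rss F C Z X Y beta'.

Definition tau_col (m p : nat) : col_idx m p := (true, None).

Definition w_feasible (R : realDomainType) (m p : nat) (n : 'I_m -> nat)
  (F C : {set 'I_p}) (Z : forall i : 'I_m, 'I_(n i) -> bool)
  (X : forall i : 'I_m, 'I_(n i) -> 'I_p -> R) (z : bool)
  (w : forall i : 'I_m, 'I_(n i) -> R) : Prop :=
  [/\ forall l, l \in C ->
        \sum_(i < m) \sum_(j < n i | Z i j == z) w i j * X i j l = 0,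
      forall l, l \in F -> forall i : 'I_m,
        \sum_(j < n i | Z i j == z) w i j * X i j l = 0
    & \sum_(i < m) \sum_(j < n i | Z i j == z) w i j = 1].

Definition w_objective (R : realDomainType) (m : nat) (n : 'I_m -> nat)
  (Z : forall i : 'I_m, 'I_(n i) -> bool) (z : bool)
  (w : forall i : 'I_m, 'I_(n i) -> R) : R :=
  \sum_(i < m) \sum_(j < n i | Z i j == z) w i j ^+ 2.

(* w is a solution of the weighting problem for arm z (only its values on
   individuals with Z_ij = z are relevant). *)
Definition w_solution (R : realDomainType) (m p : nat) (n : 'I_m -> nat)
  (F C : {set 'I_p}) (Z : forall i : 'I_m, 'I_(n i) -> bool)
  (X : forall i : 'I_m, 'I_(n i) -> 'I_p -> R) (z : bool)
  (w : forall i : 'I_m, 'I_(n i) -> R) : Prop :=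
  w_feasible F C Z X z w /\
  forall w' : forall i : 'I_m, 'I_(n i) -> R,
    w_feasible F C Z X z w' -> w_objective Z z w <= w_objective Z z w'.

(* Main.v *)
Require Import Defs.
From mathcomp Require Import all_boot all_order all_algebra.
From mathcomp Require Import ring lra.
Import Order.TTheory GRing.Theory Num.Theory.
Local Open Scope ring_scope.

Lemma quad0 (R : realFieldType) (B D : R) : 0 <= D ->
  (forall t, 0 <= 2 * t * B + t ^+ 2 * D) -> B = 0.
Proof.
move=> hD H.
have hu : D + 1 != 0 by rewrite gt_eqF //; lra.
set s := - B / (D + 1).
have hs : s * (D + 1) = - B by rewrite /s mulfVK.
have := H s.
have -> : 2 * s * B + s ^+ 2 * D = - (s ^+ 2 * (D + 2)).
  have -> : B = - (s * (D + 1)) by rewrite hs opprK.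
  ring.
rewrite oppr_ge0 => h.
have hs0 : s = 0.
  apply/eqP; rewrite -sqrf_eq0 eq_le sqr_ge0 andbT.
  rewrite -(pmulr_lle0 _ (_ : 0 < D + 2)) //; lra.
by move: hs; rewrite hs0 mul0r => /eqP; rewrite eq_sym oppr_eq0 => /eqP.
Qed.

Section Main.
Variables (R : realFieldType) (m p : nat) (n : 'I_m -> nat) (F C : {set 'I_p})
  (Z : forall i : 'I_m, 'I_(n i) -> bool)
  (X : forall i : 'I_m, 'I_(n i) -> 'I_p -> R).

Definition basef (o : option (option 'I_m * 'I_p)) (i : 'I_m) (j : 'I_(n i)) : R :=
  match o with
  | None => 1
  | Some (Some i', l) => (i == i')%:R * X i j l
  | Some (None, l) => X i j l
  end.

Lemma regE b o i j : regressor Z X (b, o) i j = basef o i j * (if b then (Z i j)%:R else 1).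
Proof. by case: o => [[[i'|] l]|]. Qed.

Definition asum (z : bool) (f : forall i : 'I_m, 'I_(n i) -> R) : R :=
  \sum_(i < m) \sum_(j < n i | Z i j == z) f i j.

Lemma asum_ext z f g : (forall i j, f i j = g i j) -> asum z f = asum z g.
Proof. by move=> H; apply eq_bigr => i _; apply eq_bigr => j _. Qed.

Lemma asum_lin z a b f g :
  asum z (fun i j => a * f i j + b * g i j) = a * asum z f + b * asum z g.
Proof.
rewrite /asum !mulr_sumr -big_split; apply eq_bigr => i _.
by rewrite !mulr_sumr -big_split.
Qed.

Lemma lin2 a b (f g : forall i : 'I_m, 'I_(n i) -> R) :
  \sum_(i < m) \sum_(j < n i) (a * f i j + b * g i j) =
  a * (\sum_(i < m) \sum_(j < n i) f i j) + b * (\sum_(i < m) \sum_(j < n i) g i j).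
Proof.
rewrite !mulr_sumr -big_split; apply eq_bigr => i _.
by rewrite !mulr_sumr -big_split.
Qed.

Lemma split_arms f : \sum_(i < m) \sum_(j < n i) f i j = asum true f + asum false f.
Proof.
rewrite /asum -big_split; apply eq_bigr => i _.
rewrite (bigID (fun j => Z i j == true)) /=; congr (_ + _).
by apply eq_bigl => j; case: (Z i j).
Qed.

Lemma arm_true_reg o f :
  \sum_(i < m) \sum_(j < n i) regressor Z X (true, o) i j * f i j =
  asum true (fun i j => basef o i j * f i j).
Proof.
apply eq_bigr => i _; rewrite [RHS]big_mkcond /=; apply eq_bigr => j _.
by rewrite regE; case: (Z i j) => /=; rewrite ?mulr1 ?mulr0 ?mul0r.
Qed.

Lemma sum_delta (P : forall i, pred 'I_(n i)) i0 (f : forall i : 'I_m, 'I_(n i) -> R) :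
  (forall i j, i != i0 -> f i j = 0) ->
  \sum_(i < m) \sum_(j < n i | P i j) f i j = \sum_(j < n i0 | P i0 j) f i0 j.
Proof.
move=> H; rewrite (bigD1 i0) //= [X in _ + X]big1 ?addr0 // => i hi.
by apply big1 => j _; apply: H.
Qed.

Lemma fittedE beta c t i j : valid_col F C c ->
  fitted F C Z X (fun c' => beta c' + (c' == c)%:R * t) i j =
  fitted F C Z X beta i j + t * regressor Z X c i j.
Proof.
move=> hc; rewrite /fitted.
under eq_bigr => c' _ do rewrite mulrDl.
rewrite big_split /=; congr (_ + _).
rewrite (bigD1 c) //= eqxx mul1r big1 ?addr0 //.
by move=> c' /andP[_ /negbTE ->]; rewrite mul0r mul0r.
Qed.

Lemma normal_eq Y beta : is_ols F C Z X Y beta -> forall c, valid_col F C c ->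
  \sum_(i < m) \sum_(j < n i) regressor Z X c i j * (Y i j - fitted F C Z X beta i j) = 0.
Proof.
move=> H c hc.
set B := (X in X = 0).
suff : - B = 0 by move/eqP; rewrite oppr_eq0 => /eqP.
apply: (@quad0 _ _ (\sum_(i < m) \sum_(j < n i) regressor Z X c i j ^+ 2)).
  by apply: sumr_ge0 => i _; apply: sumr_ge0 => j _; apply: sqr_ge0.
move=> t.
have := H (fun c' => beta c' + (c' == c)%:R * t).
rewrite -subr_ge0.
have -> : rss F C Z X Y (fun c' => beta c' + (c' == c)%:R * t) - rss F C Z X Y beta =
  \sum_(i < m) \sum_(j < n i) (2 * t * (- (regressor Z X c i j * (Y i j - fitted F C Z X beta i j)))
     + t ^+ 2 * regressor Z X c i j ^+ 2).
  rewrite /rss -sumrB; apply eq_bigr => i _; rewrite -sumrB; apply eq_bigr => j _.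
  rewrite fittedE //; ring.
rewrite lin2 /B.
rewrite (_ : \sum_(i < m) \sum_(j < n i) - _ = - B) //.
by rewrite /B -sumrN; apply eq_bigr => i _; rewrite -sumrN.
Qed.


Lemma w_orth z w v : w_solution F C Z X z w ->
  (forall l, l \in C -> asum z (fun i j => v i j * X i j l) = 0) ->
  (forall l, l \in F -> forall i, \sum_(j < n i | Z i j == z) v i j * X i j l = 0) ->
  asum z v = 0 ->
  asum z (fun i j => w i j * v i j) = 0.
Proof.
move=> [[hC hF h1] hmin] vC vF v1.
apply: (@quad0 _ _ (asum z (fun i j => v i j ^+ 2))).
  by apply: sumr_ge0 => i _; apply: sumr_ge0 => j _; apply: sqr_ge0.
move=> t.
have feas : w_feasible F C Z X z (fun i j => w i j + t * v i j).
  split.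
  - move=> l hl.
    change (asum z (fun i j => (w i j + t * v i j) * X i j l) = 0).
    rewrite (@asum_ext _ _ (fun i j => 1 * (w i j * X i j l) + t * (v i j * X i j l))).
      by rewrite asum_lin vC //; rewrite /asum hC // !mulr0 addr0.
    by move=> i j; ring.
  - move=> l hl i.
    rewrite (eq_bigr (fun j => w i j * X i j l + t * (v i j * X i j l))).
      by rewrite big_split /= -mulr_sumr hF // vF // mulr0 addr0.
    by move=> j _; ring.
  - change (asum z (fun i j => w i j + t * v i j) = 1).
    rewrite (@asum_ext _ _ (fun i j => 1 * w i j + t * v i j)).
      by rewrite asum_lin v1 mulr0 addr0 mul1r.
    by move=> i j; rewrite mul1r.
have := hmin _ feas; rewrite -subr_ge0.
have -> : w_objective Z z (fun i j => w i j + t * v i j) - w_objective Z z w =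
  asum z (fun i j => (2 * t) * (w i j * v i j) + t ^+ 2 * (v i j ^+ 2)).
  rewrite /w_objective /asum -sumrB; apply eq_bigr => i _; rewrite -sumrB.
  by apply eq_bigr => j _; ring.
by rewrite asum_lin.
Qed.

Lemma arm_ne Y beta z o : is_ols F C Z X Y beta -> valid_col F C (true, o) ->
  asum z (fun i j => basef o i j * (Y i j - fitted F C Z X beta i j)) = 0.
Proof.
move=> H hv.
have Ht := @normal_eq Y beta H _ hv.
rewrite arm_true_reg in Ht.
case: z => //.
have Hf := @normal_eq Y beta H (false, o) hv.
rewrite (eq_bigr (fun i => \sum_(j < n i) basef o i j * (Y i j - fitted F C Z X beta i j))) in Hf.
  by rewrite split_arms Ht add0r in Hf.
by move=> i _; apply eq_bigr => j _; rewrite regE mulr1.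
Qed.


Lemma asum_base z w o : w_feasible F C Z X z w -> valid_col F C (true, o) ->
  asum z (fun i j => w i j * basef o i j) = (if o is None then 1 else 0).
Proof.
move=> [hC hF h1]; case: o => [[[i' |] l]|] /= hv.
- rewrite /asum (@sum_delta (fun i j => Z i j == z) i').
    by rewrite (eq_bigr (fun j => w i' j * X i' j l)) ?hF // => j _; rewrite eqxx mul1r.
  by move=> i j /negbTE ->; rewrite mul0r mulr0.
- by rewrite -(hC l hv); apply: asum_ext.
- by rewrite -[RHS]h1; apply: asum_ext => i j; rewrite mulr1.
Qed.

Lemma asum_reg z w b o :
  asum z (fun i j => w i j * regressor Z X (b, o) i j) =
  (if b then z%:R else 1) * asum z (fun i j => w i j * basef o i j).
Proof.
rewrite /asum mulr_sumr; apply eq_bigr => i _; rewrite mulr_sumr.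
by apply eq_bigr => j /eqP hz; rewrite regE hz mulrA mulrC mulrA.
Qed.

Lemma wfit z w beta : w_feasible F C Z X z w ->
  asum z (fun i j => w i j * fitted F C Z X beta i j) =
  beta (false, None) + z%:R * beta (true, None).
Proof.
move=> hw.
have -> : asum z (fun i j => w i j * fitted F C Z X beta i j) =
  \sum_(c | valid_col F C c) beta c * asum z (fun i j => w i j * regressor Z X c i j).
  rewrite /asum /fitted.
  under eq_bigr => i _ do under eq_bigr => j _ do rewrite mulr_sumr.
  under eq_bigr => i _ do rewrite exchange_big /=.
  rewrite exchange_big /=; apply eq_bigr => c _; rewrite mulr_sumr.
  apply eq_bigr => i _; rewrite mulr_sumr; apply eq_bigr => j _.
  by rewrite mulrCA.
rewrite (bigD1 (false, None)) //= (bigD1 (true, None)) //=.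
rewrite [X in _ + (_ + X)]big1 ?addr0.
  by rewrite !asum_reg !asum_base //=; ring.
move=> [b [o|]] /andP [/andP [hv h1] h2].
  by rewrite asum_reg asum_base // !mulr0.
by case: b hv h1 h2.
Qed.

End Main.

Theorem proposition2 (R : realFieldType) (m p : nat) (n : 'I_m -> nat)
  (F C : {set 'I_p})
  (Z : forall i : 'I_m, 'I_(n i) -> bool)
  (X : forall i : 'I_m, 'I_(n i) -> 'I_p -> R)
  (Y : forall i : 'I_m, 'I_(n i) -> R)
  (hFC : F :|: C = [set: 'I_p])
  (hrank : design_full_rank F C Z X)
  (beta : col_idx m p -> R) (hols : is_ols F C Z X Y beta)
  (w1 w0 : forall i : 'I_m, 'I_(n i) -> R)
  (hw1 : w_solution F C Z X true w1)
  (hw0 : w_solution F C Z X false w0) :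
  beta (tau_col m p) =
    \sum_(i < m) \sum_(j < n i | Z i j) w1 i j * Y i j
  - \sum_(i < m) \sum_(j < n i | ~~ Z i j) w0 i j * Y i j.
Proof.
set r := fun i j => Y i j - fitted F C Z X beta i j.
have key : forall z w, w_solution F C Z X z w ->
    @asum R m n Z z (fun i j => w i j * Y i j) = beta (false, None) + z%:R * beta (true, None).
  move=> z w hw.
  have hr : @asum R m n Z z (fun i j => w i j * r i j) = 0.
    apply: (@w_orth R m p n F C Z X z w _ hw).
    - move=> l hl; rewrite -(@arm_ne _ _ _ _ F C Z X Y beta z (Some (None, l)) hols) //.
      by apply: asum_ext => i j; rewrite mulrC.
    - move=> l hl i.
      have := @arm_ne _ _ _ _ F C Z X Y beta z (Some (Some i, l)) hols hl.
      rewrite /asum (@sum_delta _ _ _ (fun i j => Z i j == z) i) /=.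
        by move=> E; rewrite -[RHS]E; apply eq_bigr => j _; rewrite eqxx mul1r mulrC.
      by move=> i' j /negbTE ->; rewrite !mul0r.
    - rewrite -(@arm_ne _ _ _ _ F C Z X Y beta z None hols) //.
      by apply: asum_ext => i j /=; rewrite mul1r.
  rewrite (@asum_ext _ _ _ _ z (fun i j => w i j * Y i j)
            (fun i j => 1 * (w i j * fitted F C Z X beta i j) + 1 * (w i j * r i j))).
    by rewrite asum_lin hr (@wfit R m p n F C Z X z w beta hw.1) !mul1r addr0.
  by move=> i j; rewrite /r; ring.
have k1 := key true w1 hw1.
have k0 := key false w0 hw0.
rewrite /asum in k1 k0.
rewrite [X in X - _](eq_bigr (fun i => \sum_(j < n i | Z i j == true) w1 i j * Y i j)); last first.
  by move=> i _; apply eq_bigl => j; case: (Z i j).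
rewrite [X in _ - X](eq_bigr (fun i => \sum_(j < n i | Z i j == false) w0 i j * Y i j)); last first.
  by move=> i _; apply eq_bigl => j; case: (Z i j).
by rewrite k1 k0 mul1r mul0r addr0 addrC addKr.
Qed.
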